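(* The divisor class $D=5H-2\sum_{i=0}^5E_i-2(E_{02}+E_{03}+E_{12}+E_{13})$ on $X$ is movable, i.e. the base locus of $|D|$ contains no divisor.
   Context: Let $p_0,\dots,p_5\in\mathbb{P}^3$ be six very general points, $l_{ij}=\overline{p_ip_j}$ ($0\le i<j\le5$), and $X$ the blow-up of $\mathbb{P}^3$ at the $p_i$ followed by the blow-up of the strict transforms of the 15 lines. $\mathrm{Pic}(X)$ has basis $H$ (pullback of a plane), $E_i$ (exceptional over $p_i$), $E_{ij}$ (exceptional over $l_{ij}$). *)

(* Defs.v *)
(* mathcomp + multinomials (mpoly) + real-closed (complex) +
   mathcomp-analysis' reals (realType).  The ground field is C, modelled as
   R[i] = complex R for an arbitrary R : realType. *)
From HB Require Import structures.
From mathcomp Require Import all_boot all_order all_algebra.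
From mathcomp Require Import reals complex.
From mathcomp Require Import mpoly.

Set Implicit Arguments.
Unset Strict Implicit.
Unset Printing Implicit Defensive.

Import GRing.Theory.
Local Open Scope ring_scope.

(* Homogeneous coordinates on P^3 : vectors in K^4 (variables 'X_0..'X_3). *)

(* The hypersurface V(f) (f homogeneous) has multiplicity >= m at the point
   [a] of P^3 (a <> 0): all partial derivatives of f of order < m vanish at a. *)
Definition pt_mult_ge (K : fieldType) (f : {mpoly K[4]}) (a : 'I_4 -> K)
    (m : nat) : Prop :=
  forall mm : 'X_{1..4}, (mdeg mm < m)%N -> (f^`M[mm]).@[a] = 0.

Definition line_mult_ge (K : fieldType) (f : {mpoly K[4]}) (a b : 'I_4 -> K)
    (m : nat) : Prop :=
  forall s t : K, pt_mult_ge f (fun k => s * a k + t * b k) m.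

(* Coefficient of E_ij in -D : the prescribed multiplicity along l_ij
   (2 for l_02, l_03, l_12, l_13, and 0 for the other lines), for i < j. *)
Definition dline (i j : 'I_6) : nat :=
  if ((i == 0 :> nat) || (i == 1 :> nat)) && ((j == 2 :> nat) || (j == 3 :> nat))
  then 2 else 0.

(* Nonzero elements of H^0(X, D), D = 5H - 2 sum E_i - 2(E02+E03+E12+E13):
   nonzero quintic forms with multiplicity >= 2 at each p_i and >= dline i j
   along each l_ij.  (The members of |D| are the divisors of these forms.) *)
Definition in_linsys (K : fieldType) (p : 'I_6 -> 'I_4 -> K)
    (f : {mpoly K[4]}) : Prop :=
  [/\ f != 0, f \is 5.-homog,
      forall i, pt_mult_ge f (p i) 2
    & forall i j : 'I_6, (i < j)%N -> line_mult_ge f (p i) (p j) (dline i j)].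

Definition mirreducible (K : fieldType) (g : {mpoly K[4]}) : Prop :=
  (1 < msize g)%N /\
  forall a b : {mpoly K[4]}, g = a * b -> (msize a <= 1)%N \/ (msize b <= 1)%N.

(* Prime divisors of X: strict transforms of irreducible surfaces V(g) of P^3,
   the exceptional divisors E_i, and the exceptional divisors E_ij (i<j). *)
Inductive prime_div (K : fieldType) :=
  | PStrict of {mpoly K[4]}
  | PExcPt of 'I_6
  | PExcLine of 'I_6 & 'I_6.

Definition is_prime_div (K : fieldType) (G : prime_div K) : Prop :=
  match G with
  | PStrict g => mirreducible g /\ exists d, g \is d.-homog
  | PExcPt _ => True
  | PExcLine i j => (i < j)%N
  end.

(* The member of |D| defined by f is
     f~ + sum_i (mult_{p_i} f - 2) E_i + sum_{i<j} (mult_{l_ij} f - dline i j) E_ij;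
   [in_member p f G] says that the prime divisor G lies in its support. *)
Definition in_member (K : fieldType) (p : 'I_6 -> 'I_4 -> K)
    (f : {mpoly K[4]}) (G : prime_div K) : Prop :=
  match G with
  | PStrict g => exists h, f = g * h
  | PExcPt i => pt_mult_ge f (p i) 3
  | PExcLine i j => line_mult_ge f (p i) (p j) (dline i j).+1
  end.

(* D is movable: no prime divisor lies in the base locus of |D|
   (i.e. in the support of every member).  If |D| is empty this is false. *)
Definition movable (K : fieldType) (p : 'I_6 -> 'I_4 -> K) : Prop :=
  forall G : prime_div K, is_prime_div G ->
    ~ (forall f, in_linsys p f -> in_member p f G).

Definition coords (K : fieldType) (p : 'I_6 -> 'I_4 -> K) : 'I_24 -> K :=
  fun k => p (inord (k %/ 4)) (inord (k %% 4)).

(* Main.v *)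
Require Import Defs.
From HB Require Import structures.
From mathcomp Require Import all_boot all_order all_algebra.
From mathcomp Require Import reals complex.
From mathcomp Require Import mpoly.
From mathcomp Require Import zify ring lra.
From Stdlib Require Import FunctionalExtensionality.
Set Implicit Arguments.
Unset Strict Implicit.
Unset Printing Implicit Defensive.
Import GRing.Theory Num.Theory.
Local Open Scope ring_scope.

Section Gen.
Variable K : comPzRingType.
Definition o0 : 'I_4 := @Ordinal 4 0 isT.
Definition o1 : 'I_4 := @Ordinal 4 1 isT.
Definition o2 : 'I_4 := @Ordinal 4 2 isT.
Definition o3 : 'I_4 := @Ordinal 4 3 isT.
Definition m3 (a b c : 'I_4 -> K) (i j l : 'I_4) : K :=
  a i * (b j * c l - b l * c j) - a j * (b i * c l - b l * c i)
  + a l * (b i * c j - b j * c i).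
Definition pl (a b c : 'I_4 -> K) (k : 'I_4) : K :=
  match val k with
  | 0 => - m3 a b c o1 o2 o3
  | 1 => m3 a b c o0 o2 o3
  | 2 => - m3 a b c o0 o1 o3
  | _ => m3 a b c o0 o1 o2 end.
Definition dot (c x : 'I_4 -> K) : K :=
  c o0 * x o0 + c o1 * x o1 + c o2 * x o2 + c o3 * x o3.
Definition lp (s t : K) (k : 'I_4) : K :=
  match val k with 0 => s | 1 => t | _ => 0 end.
Definition lin (s t : K) (a b : 'I_4 -> K) (k : 'I_4) : K := s * a k + t * b k.

Record quad := Quad { qa : K; q1 : 'I_4 -> K; q2 : 'I_4 -> K;
                      qb : K; q3 : 'I_4 -> K; q4 : 'I_4 -> K }.
Definition QV (q : quad) x :=
  qa q * (dot (q1 q) x * dot (q2 q) x) - qb q * (dot (q3 q) x * dot (q4 q) x).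
Definition QD (q : quad) x :=
  qa q * (q1 q o0 * dot (q2 q) x + dot (q1 q) x * q2 q o0)
  - qb q * (q3 q o0 * dot (q4 q) x + dot (q3 q) x * q4 q o0).
Definition Qc0 (q : quad) := qa q * (q1 q o0 * q2 q o0) - qb q * (q3 q o0 * q4 q o0).
Definition Qc1 (q : quad) := qa q * (q1 q o0 * q2 q o1 + q1 q o1 * q2 q o0)
   - qb q * (q3 q o0 * q4 q o1 + q3 q o1 * q4 q o0).
Definition Qc2 (q : quad) := qa q * (q1 q o1 * q2 q o1) - qb q * (q3 q o1 * q4 q o1).
Definition R22 (c0 c1 c2 d0 d1 d2 : K) :=
  let p := c1 * d0 - c0 * d1 in let q := c2 * d0 - c0 * d2 in
  let r := c1 * d2 - c2 * d1 in q * q + p * r.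
Definition R21 (c0 c1 c2 b0 b1 : K) :=
  c0 * (b1 * b1) - c1 * b0 * b1 + c2 * (b0 * b0).
Definition R22q (q q' : quad) := R22 (Qc0 q) (Qc1 q) (Qc2 q) (Qc0 q') (Qc1 q') (Qc2 q').
Definition R21q (q : quad) (c : 'I_4 -> K) := R21 (Qc0 q) (Qc1 q) (Qc2 q) (c o0) (c o1).

Variable p : 'I_6 -> 'I_4 -> K.
Definition i6 (n : nat) : 'I_6 :=
  match n with 0 => @Ordinal 6 0 isT | 1 => @Ordinal 6 1 isT | 2 => @Ordinal 6 2 isT
  | 3 => @Ordinal 6 3 isT | 4 => @Ordinal 6 4 isT | _ => @Ordinal 6 5 isT end.
Definition P (a b c : nat) := pl (p (i6 a)) (p (i6 b)) (p (i6 c)).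
Definition e0 := lp 1 0.
Definition e1 := lp 0 1.
Definition Aq x := dot (P 0 1 2) x * dot (P 0 1 3) x.
Definition Bq x := dot (P 0 2 3) x * dot (P 1 2 3) x.
Definition Qpt (n : nat) := Quad (Bq (p (i6 n))) (P 0 1 2) (P 0 1 3)
                                 (Aq (p (i6 n))) (P 0 2 3) (P 1 2 3).
Definition Q4 := Qpt 4.
Definition Q5 := Qpt 5.
Definition Qp := Quad (dot (P 1 2 3) (p (i6 4)) * dot (P 0 3 5) (p (i6 4))) (P 0 1 3) (P 1 2 5)
                      (dot (P 0 1 3) (p (i6 4)) * dot (P 1 2 5) (p (i6 4))) (P 1 2 3) (P 0 3 5).
Definition La := pl (p (i6 4)) (p (i6 5)) e0.
Definition Lb := pl (p (i6 4)) (p (i6 5)) e1.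
Definition f1v x := QV Q4 x * QV Q5 x * dot La x.
Definition f2v x := QV Q4 x * QV Q5 x * dot Lb x.
Definition f3v x := QV Q4 x * dot (P 0 2 5) x * QV Qp x.
Definition f4v x := QV Q5 x * dot (P 0 2 4) x * QV Qp x.
Definition ln (a b : nat) := lin 1 1 (p (i6 a)) (p (i6 b)).

Definition cpt (n : nat) := QD Q4 (p (i6 n)) * QD Q5 (p (i6 n)) * dot La (p (i6 n)).
Definition cpt4 := QD Q4 (p (i6 4)) * Lb o0 * QV Q5 (p (i6 4)).
Definition cpt5 := QD Q5 (p (i6 5)) * Lb o0 * QV Q4 (p (i6 5)).
Definition cql (a b : nat) := QD Q4 (ln a b) * QD Q5 (ln a b) * dot La (ln a b).
Definition colv (a b : nat) := f1v (ln a b).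

Definition Zlist : seq K :=
  [:: cpt 0; cpt 1; cpt 2; cpt 3; cpt4; cpt5;
      cql 0 2; cql 0 3; cql 1 2; cql 1 3;
      colv 0 1; colv 0 4; colv 0 5; colv 1 4; colv 1 5; colv 2 3; colv 2 4; colv 2 5;
      colv 3 4; colv 3 5; f3v (ln 4 5);
      f2v (ln 0 1); f3v (ln 0 1); f4v (ln 0 1);
      dot La e1; dot Lb e0; R22q Q4 Q5; R21q Q4 (P 0 2 4); R22q Q4 Qp;
      R21q Q5 (P 0 2 5); R22q Q5 Qp].
Definition Zexpr : K := foldr *%R 1 Zlist.
End Gen.

Section Ident.
Variable K : comPzRingType.
Implicit Types (a b c x : 'I_4 -> K).
Lemma pl_a a b c : dot (pl a b c) a = 0.
Proof. rewrite /dot /pl /m3 /=; ring. Qed.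
Lemma pl_b a b c : dot (pl a b c) b = 0.
Proof. rewrite /dot /pl /m3 /=; ring. Qed.
Lemma pl_c a b c : dot (pl a b c) c = 0.
Proof. rewrite /dot /pl /m3 /=; ring. Qed.
Lemma pl_ab a b c s t : dot (pl a b c) (lin s t a b) = 0.
Proof. rewrite /dot /pl /m3 /lin /=; ring. Qed.
Lemma pl_ac a b c s t : dot (pl a b c) (lin s t a c) = 0.
Proof. rewrite /dot /pl /m3 /lin /=; ring. Qed.
Lemma pl_bc a b c s t : dot (pl a b c) (lin s t b c) = 0.
Proof. rewrite /dot /pl /m3 /lin /=; ring. Qed.
Lemma dot_lp c s t : dot c (lp s t) = c o0 * s + c o1 * t.
Proof. rewrite /dot /lp /=; ring. Qed.
Lemma QV_lp (q : quad K) s t : QV q (lp s t) = Qc0 q * (s * s) + Qc1 q * (s * t) + Qc2 q * (t * t).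
Proof. rewrite /QV /Qc0 /Qc1 /Qc2 !dot_lp; ring. Qed.
End Ident.

Section Res.
Variable F : fieldType.
Lemma R22_root (c0 c1 c2 d0 d1 d2 s t : F) :
  c0 * (s * s) + c1 * (s * t) + c2 * (t * t) = 0 ->
  d0 * (s * s) + d1 * (s * t) + d2 * (t * t) = 0 ->
  (s != 0) || (t != 0) -> R22 c0 c1 c2 d0 d1 d2 = 0.
Proof.
move=> HA HB Hst.
have E : R22 c0 c1 c2 d0 d1 d2 * (s * s * t) =
  (c1 * d2 - c2 * d1) * s * (d0 * (c0 * (s * s) + c1 * (s * t) + c2 * (t * t))
       - c0 * (d0 * (s * s) + d1 * (s * t) + d2 * (t * t)))
  - (c2 * d0 - c0 * d2) * t * (d2 * (c0 * (s * s) + c1 * (s * t) + c2 * (t * t))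
       - c2 * (d0 * (s * s) + d1 * (s * t) + d2 * (t * t))).
  by rewrite /R22 /=; ring.
move: E; rewrite HA HB !(mulr0, subrr) => /eqP; rewrite !mulf_eq0 orbb.
have sq0 (x y : F) : x * (y * y) = 0 -> y != 0 -> x = 0.
  by move=> /eqP; rewrite !mulf_eq0 orbb => /orP [/eqP //|/eqP -> ]; rewrite eqxx.
case/orP => [/eqP -> //|/orP [] /eqP Z].
- move: Hst; rewrite Z eqxx /= => Ht.
  move: HA HB; rewrite Z !(mul0r, mulr0, add0r) => HA HB.
  by rewrite /R22 /= (sq0 _ _ HA Ht) (sq0 _ _ HB Ht); ring.
- move: Hst; rewrite Z eqxx orbF => Hs.
  move: HA HB; rewrite Z !(mul0r, mulr0, addr0) => HA HB.
  by rewrite /R22 /= (sq0 _ _ HA Hs) (sq0 _ _ HB Hs); ring.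
Qed.

Lemma R21_root (c0 c1 c2 b0 b1 s t : F) :
  c0 * (s * s) + c1 * (s * t) + c2 * (t * t) = 0 ->
  b0 * s + b1 * t = 0 ->
  (s != 0) || (t != 0) -> R21 c0 c1 c2 b0 b1 = 0.
Proof.
move=> HA HB Hst.
have E1 : R21 c0 c1 c2 b0 b1 * (s * s) =
  b1 * b1 * (c0 * (s * s) + c1 * (s * t) + c2 * (t * t))
  + (b0 * s + b1 * t) * (- c1 * b1 * s + c2 * (b0 * s - b1 * t)).
  by rewrite /R21; ring.
have E2 : R21 c0 c1 c2 b0 b1 * (t * t) =
  b0 * b0 * (c0 * (s * s) + c1 * (s * t) + c2 * (t * t))
  + (b0 * s + b1 * t) * (c0 * (b1 * t - b0 * s) - c1 * b0 * t).
  by rewrite /R21; ring.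
move: E1 E2; rewrite HA HB !(mulr0, mul0r, addr0) => /eqP E1 /eqP E2.
move: E1 E2; rewrite !mulf_eq0 !orbb.
case/orP: Hst => [/negbTE -> | /negbTE ->]; rewrite ?orbF.
  by move=> /eqP.
by move=> _ /eqP.
Qed.
End Res.

Section Map.
Variables (K K' : comPzRingType) (phi : {rmorphism K -> K'}).
Local Notation mp x := (fun k => phi (x k)).
Implicit Types (a b c x : 'I_4 -> K).

Lemma map_m3 a b c i j l : phi (m3 a b c i j l) = m3 (mp a) (mp b) (mp c) i j l.
Proof. by rewrite /m3 !(rmorphD, rmorphN, rmorphM). Qed.
Lemma map_pl a b c : mp (pl a b c) = pl (mp a) (mp b) (mp c).
Proof.
apply: functional_extensionality => -[[|[|[|[|k]]]] Hk] /=;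
  by rewrite /pl /= ?rmorphN map_m3.
Qed.
Lemma map_dot c x : phi (dot c x) = dot (mp c) (mp x).
Proof. by rewrite /dot !(rmorphD, rmorphM). Qed.
Lemma map_lp s t : mp (lp s t) = lp (phi s) (phi t).
Proof.
by apply: functional_extensionality => -[[|[|[|[|k]]]] Hk]; rewrite /lp /= ?rmorph0.
Qed.
Lemma map_lin s t a b : mp (lin s t a b) = lin (phi s) (phi t) (mp a) (mp b).
Proof.
by apply: functional_extensionality => k; rewrite /lin !(rmorphD, rmorphM).
Qed.
Definition mapq (q : quad K) : quad K' :=
  Quad (phi (qa q)) (mp (q1 q)) (mp (q2 q)) (phi (qb q)) (mp (q3 q)) (mp (q4 q)).
Lemma map_QV q x : phi (QV q x) = QV (mapq q) (mp x).
Proof. by rewrite /QV !(rmorphD, rmorphN, rmorphM). Qed.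
Lemma map_QD q x : phi (QD q x) = QD (mapq q) (mp x).
Proof. by rewrite /QD !(rmorphD, rmorphN, rmorphM). Qed.
Lemma map_R22q q q' : phi (R22q q q') = R22q (mapq q) (mapq q').
Proof. by rewrite /R22q /R22 /Qc0 /Qc1 /Qc2 /= !(rmorphD, rmorphN, rmorphM). Qed.
Lemma map_R21q q c : phi (R21q q c) = R21q (mapq q) (mp c).
Proof. by rewrite /R21q /R21 /Qc0 /Qc1 /Qc2 /= !(rmorphD, rmorphN, rmorphM). Qed.

Variable p : 'I_6 -> 'I_4 -> K.
Local Notation pf := (fun i k => phi (p i k)).
Lemma map_P (a b c : nat) : mp (P p a b c) = P pf a b c.
Proof. by rewrite /P map_pl. Qed.
Lemma map_e0 : mp (@e0 K) = e0 K'.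
Proof. by rewrite /e0 map_lp rmorph1 rmorph0. Qed.
Lemma map_e1 : mp (@e1 K) = e1 K'.
Proof. by rewrite /e1 map_lp rmorph1 rmorph0. Qed.
Lemma map_Aq x : phi (Aq p x) = Aq pf (mp x).
Proof. by rewrite /Aq rmorphM !map_dot !map_P. Qed.
Lemma map_Bq x : phi (Bq p x) = Bq pf (mp x).
Proof. by rewrite /Bq rmorphM !map_dot !map_P. Qed.
Lemma map_Qpt n : mapq (Qpt p n) = Qpt pf n.
Proof. by rewrite /mapq /Qpt /= map_Aq map_Bq !map_P. Qed.
Lemma map_Qp : mapq (Qp p) = Qp pf.
Proof. by rewrite /mapq /Qp /= !rmorphM !map_dot !map_P. Qed.
Lemma map_La : mp (La p) = La pf.
Proof. by rewrite /La map_pl map_e0. Qed.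
Lemma map_Lb : mp (Lb p) = Lb pf.
Proof. by rewrite /Lb map_pl map_e1. Qed.
Lemma map_Lb_at k : phi (Lb p k) = Lb pf k.
Proof. by rewrite -map_Lb. Qed.
Lemma map_ln (a b : nat) : mp (ln p a b) = ln pf a b.
Proof. by rewrite /ln map_lin rmorph1. Qed.
Lemma map_f1v x : phi (f1v p x) = f1v pf (mp x).
Proof. by rewrite /f1v !rmorphM !map_QV map_dot /Q4 /Q5 !map_Qpt map_La. Qed.
Lemma map_f2v x : phi (f2v p x) = f2v pf (mp x).
Proof. by rewrite /f2v !rmorphM !map_QV map_dot /Q4 /Q5 !map_Qpt map_Lb. Qed.
Lemma map_f3v x : phi (f3v p x) = f3v pf (mp x).
Proof. by rewrite /f3v !rmorphM !map_QV map_dot /Q4 !map_Qpt map_Qp map_P. Qed.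
Lemma map_f4v x : phi (f4v p x) = f4v pf (mp x).
Proof. by rewrite /f4v !rmorphM !map_QV map_dot /Q5 !map_Qpt map_Qp map_P. Qed.

Lemma map_Zexpr : phi (Zexpr p) = Zexpr pf.
Proof.
rewrite /Zexpr /Zlist /= ?rmorphM ?rmorph1.
rewrite /cpt /cpt4 /cpt5 /cql /colv ?rmorphM ?map_QD ?map_QV ?map_dot.
rewrite ?map_f1v ?map_f2v ?map_f3v ?map_f4v ?map_ln ?map_R22q ?map_R21q.
by rewrite /Q4 /Q5 ?map_Qpt ?map_Qp ?map_La ?map_Lb ?map_P ?map_e0 ?map_e1 ?map_Lb_at.
Qed.
End Map.

Section Van.
Variable K : comPzRingType.
Variable p : 'I_6 -> 'I_4 -> K.
Lemma Qpt_van n x :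
  (dot (P p 0 1 2) x = 0 \/ dot (P p 0 1 3) x = 0) ->
  (dot (P p 0 2 3) x = 0 \/ dot (P p 1 2 3) x = 0) -> QV (Qpt p n) x = 0.
Proof.
rewrite /QV /=.
by case=> [->|->] [->|->]; rewrite ?(mulr0, mul0r, subrr).
Qed.
Lemma Qpt_self n : QV (Qpt p n) (p (i6 n)) = 0.
Proof. rewrite /QV /Qpt /Aq /Bq /=; ring. Qed.
Lemma Qp_van x :
  (dot (P p 0 1 3) x = 0 \/ dot (P p 1 2 5) x = 0) ->
  (dot (P p 1 2 3) x = 0 \/ dot (P p 0 3 5) x = 0) -> QV (Qp p) x = 0.
Proof.
rewrite /QV /=.
by case=> [->|->] [->|->]; rewrite ?(mulr0, mul0r, subrr).
Qed.
Lemma Qp_4 : QV (Qp p) (p (i6 4)) = 0.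
Proof. rewrite /QV /Qp /=; ring. Qed.
End Van.


Section Mult.
Variable F : fieldType.
Implicit Types (f g h : {mpoly F[4]}) (a : 'I_4 -> F).

Lemma PM0 f a : pt_mult_ge f a 0.
Proof. by move=> mm. Qed.

Lemma PMS f a m : f.@[a] = 0 -> (forall i, pt_mult_ge (f^`M(i)) a m) ->
  pt_mult_ge f a m.+1.
Proof.
move=> f0 H mm; have [->|nz] := eqVneq mm 0%MM.
  by rewrite mderivm0m.
have [i Hi] : exists i, mm i != 0%N.
  apply/existsP; apply: contraR nz => /existsPn H0; apply/eqP/mnmP => j.
  by rewrite mnm0E; apply/eqP; move: (H0 j); rewrite negbK.
have -> : mm = (U_(i) + (mm - U_(i)))%MM.
  by rewrite addmC submK // lep1mP.
rewrite mdegD mdeg1 add1n ltnS => lt; rewrite mderivmDm mderivmU1m.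
exact: H.
Qed.

Lemma PMP f a m i : pt_mult_ge f a m.+1 -> pt_mult_ge (f^`M(i)) a m.
Proof.
move=> H mm lt; rewrite -mderivmU1m -mderivmDm; apply: H.
by rewrite mdegD mdeg1 add1n ltnS.
Qed.

Lemma PMv f a m : pt_mult_ge f a m.+1 -> f.@[a] = 0.
Proof. by move=> H; move: (H 0%MM); rewrite mderivm0m mdeg0; apply. Qed.

Lemma PMmono f a m n : (m <= n)%N -> pt_mult_ge f a n -> pt_mult_ge f a m.
Proof. by move=> le H mm lt; apply: H; apply: leq_trans le. Qed.

Lemma PMD f g a m : pt_mult_ge f a m -> pt_mult_ge g a m -> pt_mult_ge (f + g) a m.
Proof. by move=> H1 H2 mm lt; rewrite mderivmD mevalD H1 // H2 // addr0. Qed.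

Lemma PMM_gen k : forall f g a m n, (m + n <= k)%N ->
  pt_mult_ge f a m -> pt_mult_ge g a n -> pt_mult_ge (f * g) a (m + n)%N.
Proof.
elim: k => [|k IH] f g a m n.
  by rewrite leqn0 => /eqP ->; move=> _ _; apply: PM0.
case: m => [|m]; case: n => [|n] // le Hf Hg.
- rewrite add0n; apply: PMS.
    by rewrite mevalM (PMv Hg) mulr0.
  move=> i; rewrite mderivM; apply: PMD.
    rewrite -[n]/(0 + n)%N; apply: IH; [lia|exact: PM0|exact: PMmono (leqnSn n) Hg].
  rewrite -[n]/(0 + n)%N; apply: IH; [lia|exact: Hf|exact: PMP Hg].
- rewrite addn0; apply: PMS.
    by rewrite mevalM (PMv Hf) mul0r.
  move=> i; rewrite mderivM; apply: PMD.
    rewrite -[m]addn0; apply: IH; [lia|exact: PMP Hf|exact: Hg].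
  rewrite -[m]addn0; apply: IH; [lia|exact: PMmono (leqnSn m) Hf|exact: PM0].
- rewrite addSn; apply: PMS.
    by rewrite mevalM (PMv Hf) mul0r.
  move=> i; rewrite mderivM; apply: PMD.
    apply: IH; [lia|exact: PMP Hf|exact: Hg].
  rewrite addnS -addSn; apply: IH; [lia|exact: Hf|exact: PMP Hg].
Qed.

Lemma PMM f g a m n :
  pt_mult_ge f a m -> pt_mult_ge g a n -> pt_mult_ge (f * g) a (m + n)%N.
Proof. exact: (@PMM_gen (m + n)). Qed.

Lemma PM1 f a : f.@[a] = 0 -> pt_mult_ge f a 1.
Proof. by move=> H; apply: PMS => // i; apply: PM0. Qed.

Definition V2 f g h a :=
  (f.@[a] = 0 /\ g.@[a] = 0) \/ (f.@[a] = 0 /\ h.@[a] = 0) \/ (g.@[a] = 0 /\ h.@[a] = 0).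

Lemma PM_V2 f g h a : V2 f g h a -> pt_mult_ge (f * g * h) a 2.
Proof.
case=> [[Hf Hg]|[[Hf Hh]|[Hg Hh]]].
- exact: (PMM (PMM (PM1 Hf) (PM1 Hg)) (PM0 h a)).
- exact: (PMM (PMM (PM1 Hf) (PM0 g a)) (PM1 Hh)).
- exact: (PMM (PMM (PM0 f a) (PM1 Hg)) (PM1 Hh)).
Qed.

Lemma PM3_d2 f a i : pt_mult_ge f a 3 -> ((f^`M(i))^`M(i)).@[a] = 0.
Proof.
by move=> H; move: (H (U_(i) + U_(i))%MM); rewrite mderivmDm !mderivmU1m mdegD mdeg1; apply.
Qed.

Lemma d2a f g h a i : f.@[a] = 0 -> g.@[a] = 0 ->
  ((f * g * h)^`M(i))^`M(i).@[a] = 2%:R * ((f^`M(i)).@[a] * (g^`M(i)).@[a] * h.@[a]).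
Proof.
move=> Hf Hg; rewrite !(mderivD, mderivM) !(mevalD, mevalM) Hf Hg.
rewrite !(mul0r, mulr0, addr0, add0r); ring.
Qed.

Lemma d2b f g h a i : f.@[a] = 0 -> h.@[a] = 0 ->
  ((f * g * h)^`M(i))^`M(i).@[a] = 2%:R * ((f^`M(i)).@[a] * (h^`M(i)).@[a] * g.@[a]).
Proof.
move=> Hf Hg; rewrite !(mderivD, mderivM) !(mevalD, mevalM) Hf Hg.
rewrite !(mul0r, mulr0, addr0, add0r); ring.
Qed.

Lemma d2c f g h a i : g.@[a] = 0 -> h.@[a] = 0 ->
  ((f * g * h)^`M(i))^`M(i).@[a] = 2%:R * ((g^`M(i)).@[a] * (h^`M(i)).@[a] * f.@[a]).
Proof.
move=> Hf Hg; rewrite !(mderivD, mderivM) !(mevalD, mevalM) Hf Hg.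
rewrite !(mul0r, mulr0, addr0, add0r); ring.
Qed.
End Mult.


Section Poly.
Variable F : fieldType.
Implicit Types (c x : 'I_4 -> F).

Definition LF c : {mpoly F[4]} :=
  c o0 *: 'X_o0 + c o1 *: 'X_o1 + c o2 *: 'X_o2 + c o3 *: 'X_o3.
Definition QFp (q : quad F) : {mpoly F[4]} :=
  qa q *: (LF (q1 q) * LF (q2 q)) - qb q *: (LF (q3 q) * LF (q4 q)).

Lemma mderivXU (i j : 'I_4) : ('X_j : {mpoly F[4]})^`M(i) = (j == i)%:R%:MP.
Proof.
rewrite mderivX mnm1E; case: eqP => [->|_] /=.
  have -> : (U_(i) - U_(i))%MM = 0%MM by apply/mnmP => k; rewrite !mnmE subnn.
  by rewrite mpolyX0 scale1r.
by rewrite scale0r.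
Qed.

Lemma LF_eval c x : (LF c).@[x] = dot c x.
Proof. by rewrite /LF !mevalD !mevalZ !mevalXU. Qed.
Lemma LF_der c x : ((LF c)^`M(o0)).@[x] = c o0.
Proof.
rewrite /LF !mderivD !mderivZ !mderivXU /= !mevalD !mevalZ !mevalC.
by rewrite !mulr0 !mulr1 !addr0.
Qed.
Lemma QF_eval q x : (QFp q).@[x] = QV q x.
Proof. by rewrite /QFp mevalB !mevalZ !mevalM !LF_eval. Qed.
Lemma QF_der q x : ((QFp q)^`M(o0)).@[x] = QD q x.
Proof.
rewrite /QFp mderivB !mderivZ !mderivM mevalB !mevalZ !mevalD !mevalM.
by rewrite !LF_eval !LF_der.
Qed.

Lemma LF_homog c : LF c \is 1.-homog.
Proof.
have h (i : 'I_4) (a : F) : a *: ('X_i : {mpoly F[4]}) \is 1.-homog.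
  by apply: dhomogZ; rewrite dhomogX; exact/eqP/mdeg1.
by rewrite /LF !rpredD.
Qed.
Lemma QF_homog q : QFp q \is 2.-homog.
Proof.
rewrite /QFp rpredB //; apply: dhomogZ;
  exact: (dhomogM (LF_homog _) (LF_homog _)).
Qed.

Variable p : 'I_6 -> 'I_4 -> F.
Definition F1 := QFp (Q4 p) * QFp (Q5 p) * LF (La p).
Definition F2 := QFp (Q4 p) * QFp (Q5 p) * LF (Lb p).
Definition F3 := QFp (Q4 p) * LF (P p 0 2 5) * QFp (Qp p).
Definition F4 := QFp (Q5 p) * LF (P p 0 2 4) * QFp (Qp p).

Lemma F1_eval x : F1.@[x] = f1v p x.
Proof. by rewrite /F1 !mevalM !QF_eval LF_eval. Qed.
Lemma F2_eval x : F2.@[x] = f2v p x.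
Proof. by rewrite /F2 !mevalM !QF_eval LF_eval. Qed.
Lemma F3_eval x : F3.@[x] = f3v p x.
Proof. by rewrite /F3 !mevalM !QF_eval LF_eval. Qed.
Lemma F4_eval x : F4.@[x] = f4v p x.
Proof. by rewrite /F4 !mevalM !QF_eval LF_eval. Qed.

Lemma ord6P (Q : 'I_6 -> Prop) : Q (i6 0) -> Q (i6 1) -> Q (i6 2) -> Q (i6 3) ->
  Q (i6 4) -> Q (i6 5) -> forall i, Q i.
Proof.
move=> H0 H1 H2 H3 H4 H5 [[|[|[|[|[|[|k]]]]]] Hk].
all: try by [].
- by rewrite (_ : Ordinal Hk = i6 0) //; apply: val_inj.
- by rewrite (_ : Ordinal Hk = i6 1) //; apply: val_inj.
- by rewrite (_ : Ordinal Hk = i6 2) //; apply: val_inj.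
- by rewrite (_ : Ordinal Hk = i6 3) //; apply: val_inj.
- by rewrite (_ : Ordinal Hk = i6 4) //; apply: val_inj.
- by rewrite (_ : Ordinal Hk = i6 5) //; apply: val_inj.
Qed.

Lemma quadlines (i j : 'I_6) : (i < j)%N -> dline i j = 2%N ->
  (i = i6 0 /\ j = i6 2) \/ (i = i6 0 /\ j = i6 3) \/
  (i = i6 1 /\ j = i6 2) \/ (i = i6 1 /\ j = i6 3).
Proof.
move: i j; apply: ord6P; apply: ord6P => //=; rewrite /dline /= => _ _.
all: try by [left | right; left | right; right; left | right; right; right].
Qed.

Lemma in_linsys_of f g h : f * g * h != 0 -> f * g * h \is 5.-homog ->
  (forall i, V2 f g h (p i)) ->
  (forall i j : 'I_6, (i < j)%N -> dline i j = 2%N -> forall s t, V2 f g h (lin s t (p i) (p j))) ->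
  in_linsys p (f * g * h).
Proof.
move=> nz hom Hp Hl; split => // [i|i j lt]; first exact: PM_V2.
move=> s t; rewrite /dline; case: ifP => H.
  by apply: PM_V2; apply: Hl => //; rewrite /dline H.
exact: PM0.
Qed.

Ltac pv := rewrite /P /La /Lb; first [ exact: pl_a | exact: pl_b | exact: pl_c
  | exact: pl_ab | exact: pl_ac | exact: pl_bc ].
Ltac dv := first [ left; pv | right; pv ].
Ltac van := rewrite ?QF_eval ?LF_eval /Q4 /Q5; first [ pv | exact: Qpt_self | exact: Qp_4
  | (apply: Qpt_van; dv) | (apply: Qp_van; dv) ].
Ltac v2 := rewrite /V2; first [ left; split; van | right; left; split; van
  | right; right; split; van ].
Ltac lines lt dl := case: (quadlines lt dl) => [[-> ->]|[[-> ->]|[[-> ->]|[-> ->]]]].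

Lemma F1_in : f1v p (ln p 0 1) != 0 -> in_linsys p F1.
Proof.
move=> nz; rewrite /F1; apply: in_linsys_of.
- by apply: contra nz => /eqP H; rewrite -F1_eval /F1 H meval0.
- exact: dhomogM (dhomogM (QF_homog _) (QF_homog _)) (LF_homog _).
- by apply: ord6P; v2.
- by move=> i j lt dl s t; lines lt dl; v2.
Qed.
Lemma F2_in : f2v p (ln p 0 1) != 0 -> in_linsys p F2.
Proof.
move=> nz; rewrite /F2; apply: in_linsys_of.
- by apply: contra nz => /eqP H; rewrite -F2_eval /F2 H meval0.
- exact: dhomogM (dhomogM (QF_homog _) (QF_homog _)) (LF_homog _).
- by apply: ord6P; v2.
- by move=> i j lt dl s t; lines lt dl; v2.
Qed.
Lemma F3_in : f3v p (ln p 0 1) != 0 -> in_linsys p F3.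
Proof.
move=> nz; rewrite /F3; apply: in_linsys_of.
- by apply: contra nz => /eqP H; rewrite -F3_eval /F3 H meval0.
- exact: dhomogM (dhomogM (QF_homog _) (LF_homog _)) (QF_homog _).
- by apply: ord6P; v2.
- by move=> i j lt dl s t; lines lt dl; v2.
Qed.
Lemma F4_in : f4v p (ln p 0 1) != 0 -> in_linsys p F4.
Proof.
move=> nz; rewrite /F4; apply: in_linsys_of.
- by apply: contra nz => /eqP H; rewrite -F4_eval /F4 H meval0.
- exact: dhomogM (dhomogM (QF_homog _) (LF_homog _)) (QF_homog _).
- by apply: ord6P; v2.
- by move=> i j lt dl s t; lines lt dl; v2.
Qed.
End Poly.


Section Root.
Variable F : numClosedFieldType.

Lemma mmap_horner (g : {mpoly F[4]}) (h : 'I_4 -> {poly F}) (t : F) :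
  (mmap (@polyC F) h g).[t] = g.@[fun k => (h k).[t]].
Proof.
rewrite /mmap mevalE horner_sum; apply: eq_bigr => m _.
rewrite hornerM hornerC /mmap1 horner_prod; congr (_ * _).
by apply: eq_bigr => i _; rewrite horner_exp.
Qed.

Lemma homog_scale (g : {mpoly F[4]}) d (l : F) x : g \is d.-homog ->
  g.@[fun k => l * x k] = l ^+ d * g.@[x].
Proof.
move=> hg; rewrite !mevalE mulr_sumr; apply: eq_big_seq => m Hm.
have Hd : mdeg m = d by have := dhomog_mf hg Hm.
rewrite mulrCA; congr (_ * _).
under eq_bigr do rewrite exprMn.
by rewrite big_split /= prodrXr -Hd mdegE.
Qed.

Lemma lp_horner (a b : {poly F}) t : (fun k => (lp a b k).[t]) =1 lp a.[t] b.[t].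
Proof. by move=> [[|[|[|[|k]]]] Hk]; rewrite /lp /= ?horner0. Qed.

Lemma g_root (g : {mpoly F[4]}) d : g \is d.-homog -> (0 < d)%N ->
  exists s t : F, ((s != 0) || (t != 0)) /\ g.@[lp s t] = 0.
Proof.
move=> hg d0.
set u := mmap (@polyC F) (lp 1 'X) g.
have Hu t : u.[t] = g.@[lp 1 t].
  by rewrite mmap_horner; apply: meval_eq => k; rewrite lp_horner hornerC hornerX.
have [Hs|Hs] := boolP (size u == 1%N); last first.
  have [t Ht] := closed_rootP u Hs.
  by exists 1, t; rewrite oner_eq0 /= -Hu; split => //; apply/eqP.
have [c cn0 Uc] := size_poly1P u Hs.
set w := mmap (@polyC F) (lp 'X 1) g.
have Hw t : w.[t] = g.@[lp t 1].
  by rewrite mmap_horner; apply: meval_eq => k; rewrite lp_horner hornerC hornerX.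
have Hw2 t : t != 0 -> w.[t] = t ^+ d * c.
  move=> tn0; rewrite Hw.
  have -> : g.@[lp t 1] = g.@[fun k => t * lp 1 t^-1 k].
    by apply: meval_eq => -[[|[|[|[|k]]]] Hk]; rewrite /lp /= ?mulr1 ?mulr0 ?divff.
  by rewrite (homog_scale t _ hg) -Hu Uc hornerC.
set r := w - c *: 'X^d.
have r0 : r = 0.
  apply/eqP; apply: contraT => rn0.
  pose rs := [seq (i.+1)%:R : F | i <- iota 0 (size r)].
  have := max_poly_roots rn0 (rs := rs).
  rewrite size_map size_iota ltnn; apply.
    apply/allP => x /mapP [i _ ->]; rewrite /root /r hornerD hornerN hornerZ hornerXn.
    rewrite Hw2; first by rewrite mulrC subrr.
    by rewrite pnatr_eq0.
  by rewrite /rs map_inj_uniq ?iota_uniq // => i j /eqP; rewrite eqr_nat eqSS => /eqP.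
have : w.[0] = 0.
  by move: r0 => /eqP; rewrite subr_eq0 => /eqP ->; rewrite hornerZ hornerXn expr0n gtn_eqF // mulr0.
rewrite Hw => H; exists 0, 1; split => //.
by rewrite oner_eq0 orbT.
Qed.
End Root.


Ltac pv := rewrite /P /La /Lb; first [ exact: pl_a | exact: pl_b | exact: pl_c
  | exact: pl_ab | exact: pl_ac | exact: pl_bc ].
Ltac dv := first [ left; pv | right; pv ].
Ltac van := rewrite ?QF_eval ?LF_eval /Q4 /Q5; first [ pv | exact: Qpt_self | exact: Qp_4
  | (apply: Qpt_van; dv) | (apply: Qp_van; dv) ].

Section Mov.
Variable F : numClosedFieldType.
Implicit Types (x : 'I_4 -> F) (q : quad F).

Lemma pt_contra_a q q' c x : pt_mult_ge (QFp q * QFp q' * LF c) x 3 ->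
  QV q x = 0 -> QV q' x = 0 -> QD q x * QD q' x * dot c x = 0.
Proof.
move=> H h1 h2; have := PM3_d2 o0 H; rewrite d2a ?QF_eval //.
rewrite !QF_der LF_eval => /eqP; rewrite mulf_eq0 pnatr_eq0 /=; exact/eqP.
Qed.
Lemma pt_contra_b q q' c x : pt_mult_ge (QFp q * QFp q' * LF c) x 3 ->
  QV q x = 0 -> dot c x = 0 -> QD q x * c o0 * QV q' x = 0.
Proof.
move=> H h1 h2; have := PM3_d2 o0 H; rewrite d2b ?QF_eval ?LF_eval //.
rewrite !QF_der LF_der => /eqP; rewrite mulf_eq0 pnatr_eq0 /=; exact/eqP.
Qed.
Lemma pt_contra_c q q' c x : pt_mult_ge (QFp q * QFp q' * LF c) x 3 ->
  QV q' x = 0 -> dot c x = 0 -> QD q' x * c o0 * QV q x = 0.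
Proof.
move=> H h1 h2; have := PM3_d2 o0 H; rewrite d2c ?QF_eval ?LF_eval //.
rewrite !QF_der LF_der => /eqP; rewrite mulf_eq0 pnatr_eq0 /=; exact/eqP.
Qed.

Lemma allnz (l : seq F) : foldr *%R 1 l != 0 -> all (fun y : F => y != 0) l.
Proof.
elim: l => //= a l IH; rewrite mulf_eq0 negb_or => /andP[-> /IH]. done.
Qed.
Arguments cpt : simpl never.
Arguments cpt4 : simpl never.
Arguments cpt5 : simpl never.
Arguments cql : simpl never.
Arguments colv : simpl never.
Arguments f2v : simpl never.
Arguments f3v : simpl never.
Arguments f4v : simpl never.
Arguments dot : simpl never.
Arguments R22q : simpl never.
Arguments R21q : simpl never.

Lemma movable_of (p : 'I_6 -> 'I_4 -> F) : Zexpr p != 0 -> movable p.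
Proof.
move=> /allnz; rewrite /Zlist /= => /andP[c0 /andP[c1 /andP[c2 /andP[c3 /andP[c4 /andP[c5 /andP[q02 /andP[q03 /andP[q12 /andP[q13 /andP[o01 /andP[o04 /andP[o05 /andP[o14 /andP[o15 /andP[o23 /andP[o24 /andP[o25 /andP[o34 /andP[o35 /andP[o45 /andP[nf2 /andP[nf3 /andP[nf4 /andP[nLa /andP[nLb /andP[r45 /andP[r4a /andP[r4p /andP[r5a /andP[r5p _]]]]]]]]]]]]]]]]]]]]]]]]]]]]]]].
case=> [g|i|i j] /= HG H.
-
  case: HG => [[Hsz _] [d hd]].
  have d0 : (0 < d)%N.
    rewrite lt0n; apply/negP => /eqP d0; subst d; move: Hsz; rewrite msizeE.
    have le1 : (\max_(m <- msupp g) (mdeg m).+1 <= 1)%N.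
      apply/bigmax_leqP_seq => m Hm _.
      by have := dhomog_mf hd Hm => /= ->.
    by rewrite ltnNge le1.
  have [s [t [st gz]]] := g_root hd d0.
  have v f : in_linsys p f -> f.@[lp s t] = 0.
    by case/H => h ->; rewrite mevalM gz mul0r.
  have E1 := v _ (F1_in o01); have E2 := v _ (F2_in nf2).
  have E3 := v _ (F3_in nf3); have E4 := v _ (F4_in nf4).
  rewrite F1_eval /f1v in E1; rewrite F2_eval /f2v in E2.
  rewrite F3_eval /f3v in E3; rewrite F4_eval /f4v in E4.
  have La0 : La p o0 = 0.
    by have := pl_c (p (i6 4)) (p (i6 5)) (e0 F); rewrite dot_lp mulr1 mulr0 addr0.
  have Lb1 : Lb p o1 = 0.
    by have := pl_c (p (i6 4)) (p (i6 5)) (e1 F); rewrite dot_lp mulr1 mulr0 add0r.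
  have La1 : La p o1 != 0 by move: nLa; rewrite dot_lp mulr1 mulr0 add0r.
  have Lb0 : Lb p o0 != 0 by move: nLb; rewrite dot_lp mulr1 mulr0 addr0.
  have R22c q q' : R22q q q' != 0 -> QV q (lp s t) = 0 -> QV q' (lp s t) = 0 -> False.
    move=> /negP Hn h1 h2; apply: Hn; apply/eqP; rewrite /R22q.
    by apply: R22_root st; rewrite -QV_lp.
  have R21c q c : R21q q c != 0 -> QV q (lp s t) = 0 -> dot c (lp s t) = 0 -> False.
    move=> /negP Hn h1 h2; apply: Hn; apply/eqP; rewrite /R21q.
    by apply: R21_root st; [rewrite -QV_lp | rewrite -dot_lp].
  have [h4|n4] := eqVneq (QV (Q4 p) (lp s t)) 0.
    have n5 : QV (Q5 p) (lp s t) != 0 by apply/eqP => h5; exact: R22c _ _ r45 h4 h5.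
    move/eqP: E4; rewrite !mulf_eq0 (negbTE n5) /= => /orP[/eqP h|/eqP h].
      exact: R21c _ _ r4a h4 h.
    exact: R22c _ _ r4p h4 h.
  have [h5|n5] := eqVneq (QV (Q5 p) (lp s t)) 0.
    move/eqP: E3; rewrite !mulf_eq0 (negbTE n4) /= => /orP[/eqP h|/eqP h].
      exact: R21c _ _ r5a h5 h.
    exact: R22c _ _ r5p h5 h.
  move/eqP: E1; rewrite !mulf_eq0 (negbTE n4) (negbTE n5) /= dot_lp La0 mul0r add0r.
  rewrite mulf_eq0 (negbTE La1) /= => /eqP t0.
  move/eqP: E2; rewrite !mulf_eq0 (negbTE n4) (negbTE n5) /= dot_lp Lb1 mul0r addr0.
  rewrite mulf_eq0 (negbTE Lb0) /= => /eqP s0.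
  by move: st; rewrite s0 t0 eqxx.
-
  move: i H; apply: ord6P => H.
  + apply: (negP c0); apply/eqP; apply: (pt_contra_a (H _ (F1_in o01))); van.
  + apply: (negP c1); apply/eqP; apply: (pt_contra_a (H _ (F1_in o01))); van.
  + apply: (negP c2); apply/eqP; apply: (pt_contra_a (H _ (F1_in o01))); van.
  + apply: (negP c3); apply/eqP; apply: (pt_contra_a (H _ (F1_in o01))); van.
  + apply: (negP c4); apply/eqP; apply: (pt_contra_b (H _ (F2_in nf2))); van.
  + apply: (negP c5); apply/eqP; apply: (pt_contra_c (H _ (F2_in nf2))); van.
-
  move: i j HG H; apply: ord6P; apply: ord6P => HG H; try by [].
  + apply: (negP o01); apply/eqP; rewrite /colv -F1_eval; exact: PMv (H _ (F1_in o01) 1 1).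
  + apply: (negP q02); apply/eqP; apply: (pt_contra_a (H _ (F1_in o01) 1 1)); rewrite /ln; van.
  + apply: (negP q03); apply/eqP; apply: (pt_contra_a (H _ (F1_in o01) 1 1)); rewrite /ln; van.
  + apply: (negP o04); apply/eqP; rewrite /colv -F1_eval; exact: PMv (H _ (F1_in o01) 1 1).
  + apply: (negP o05); apply/eqP; rewrite /colv -F1_eval; exact: PMv (H _ (F1_in o01) 1 1).
  + apply: (negP q12); apply/eqP; apply: (pt_contra_a (H _ (F1_in o01) 1 1)); rewrite /ln; van.
  + apply: (negP q13); apply/eqP; apply: (pt_contra_a (H _ (F1_in o01) 1 1)); rewrite /ln; van.
  + apply: (negP o14); apply/eqP; rewrite /colv -F1_eval; exact: PMv (H _ (F1_in o01) 1 1).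
  + apply: (negP o15); apply/eqP; rewrite /colv -F1_eval; exact: PMv (H _ (F1_in o01) 1 1).
  + apply: (negP o23); apply/eqP; rewrite /colv -F1_eval; exact: PMv (H _ (F1_in o01) 1 1).
  + apply: (negP o24); apply/eqP; rewrite /colv -F1_eval; exact: PMv (H _ (F1_in o01) 1 1).
  + apply: (negP o25); apply/eqP; rewrite /colv -F1_eval; exact: PMv (H _ (F1_in o01) 1 1).
  + apply: (negP o34); apply/eqP; rewrite /colv -F1_eval; exact: PMv (H _ (F1_in o01) 1 1).
  + apply: (negP o35); apply/eqP; rewrite /colv -F1_eval; exact: PMv (H _ (F1_in o01) 1 1).
  + apply: (negP o45); apply/eqP; rewrite -F3_eval; exact: PMv (H _ (F3_in nf3) 1 1).
Qed.
End Mov.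


Definition cfgn (i : 'I_6) (c : 'I_4) : nat :=
  nth 0%N (nth [::] [:: [:: 0; 3; 2; 2]; [:: 2; 1; 1; 1]; [:: 3; 1; 0; 3];
     [:: 2; 2; 2; 0]; [:: 2; 2; 0; 1]; [:: 1; 2; 1; 2]]%N i) c.
Definition cfgI (i : 'I_6) (c : 'I_4) : int := (cfgn i c)%:Z.

Lemma cfg_Z11 : Zexpr (fun i c => (cfgI i c)%:~R : 'Z_11) != 0.
Proof. by vm_compute. Qed.

Lemma idx_lt (i : 'I_6) (c : 'I_4) : (4 * i + c < 24)%N.
Proof. have := ltn_ord i; have := ltn_ord c; lia. Qed.
Definition idx (i : 'I_6) (c : 'I_4) : 'I_24 := Ordinal (idx_lt i c).

Section Z.
Variable R : realType.
Definition psym (i : 'I_6) (c : 'I_4) : {mpoly R[i][24]} := 'X_(idx i c).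

Lemma coords_idx (p : 'I_6 -> 'I_4 -> R[i]) i c : coords p (idx i c) = p i c.
Proof.
rewrite /coords /=.
have -> : ((4 * i + c) %/ 4 = i)%N by have := ltn_ord c; lia.
have -> : ((4 * i + c) %% 4 = c)%N by have := ltn_ord c; lia.
by rewrite !inord_val.
Qed.

Lemma Zeval (p : 'I_6 -> 'I_4 -> R[i]) : (Zexpr psym).@[coords p] = Zexpr p.
Proof.
have := map_Zexpr (meval (coords p) : {rmorphism _ -> _}) psym => /= ->.
congr Zexpr; apply: functional_extensionality => j.
apply: functional_extensionality => c.
by rewrite /psym mevalXU coords_idx.
Qed.

Lemma Znz : Zexpr psym != 0.
Proof.
apply/negP => /eqP Z0.
pose pC i c := ((cfgI i c)%:~R : R[i]).
have : (Zexpr psym).@[coords pC] = 0 by rewrite Z0 meval0.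
rewrite Zeval.
have -> : Zexpr pC = (Zexpr cfgI)%:~R.
  by have := map_Zexpr (intr : {rmorphism int -> R[i]}) cfgI => /= ->.
move/eqP; rewrite intr_eq0 => /eqP Zi.
have := map_Zexpr (intr : {rmorphism int -> 'Z_11}) cfgI => /=.
rewrite Zi => E; move: cfg_Z11; rewrite -E.
by rewrite mulr0z eqxx.
Qed.
End Z.

Unset Implicit Arguments.

Theorem lemma3p7 (R : realType) :
  exists Z : nat -> {mpoly R[i][24]},
    (forall k, Z k != 0) /\
    forall p : 'I_6 -> 'I_4 -> R[i],
      (forall i, exists c, p i c != 0) ->
      (forall k, (Z k).@[coords p] != 0) ->
      movable p.
Proof.
exists (fun _ => Zexpr (@psym R)); split; first by move=> _; exact: Znz.
move=> p _ HZ; apply: movable_of.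
by have := HZ 0%N; rewrite Zeval.
Qed.
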